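(* Let $\gamma\ge0$ and $g$ be integers with $g$ sufficiently large relative to $\gamma$, and fix a set ${\rm S}_0$ arising as the residue-zero part of some semigroup in ${\rm H}(g,\gamma)$. Let $u_1, u_1'$ be integers, let ${\rm S}\in{\rm H}_{u_1}$ be such that $\#{\rm S}_{(u_1)_3}$ is maximal among all members of ${\rm H}_{u_1}$, and let ${\rm T}\in{\rm H}_{u_1'}$ be such that $\#{\rm T}_{(u_1')_3}$ is maximal among all members of ${\rm H}_{u_1'}$. If $\chi := u_1 - u_1^H < 6\gamma$ and ${\rm S}_{(u_1)_3} \subsetneq {\rm T}_{(u_1')_3}$, then $\widetilde{I}_{\rm T} < \widetilde{I}_{\rm S}$.
   Context: A numerical semigroup is a submonoid of $\mathbb{N}$ with finite complement; its genus is the size of the complement. For an integer $u$, $(u)_3$ is its residue mod 3 in $\{0,1,2\}$. For a semigroup ${\rm S}$ of genus $g$, ${\rm S}^*={\rm S}\cap\{1,\dots,2g\}$, ${\rm S}_i=\{s\in{\rm S}^*:(s)_3=i\}$, and the inflection is $\widetilde{I}_{\rm S}=\sum_{s\in{\rm S}^*}s$. A numerical semigroup is $(3,\gamma)$-hyperelliptic if its first $\gamma$ positive elements are multiples of 3 with the $\gamma$-th equal to $6\gamma$, and $3(2\gamma+1)$ belongs to it. ${\rm H}={\rm H}(g,\gamma)$ is the set of $(3,\gamma)$-hyperelliptic semigroups of genus $g$; $u_1({\rm T}) := \min\{t\in{\rm T}:(t)_3\ne0\}$; $u_1^H:=\min\{u_1({\rm T}):{\rm T}\in{\rm H}\}$.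 For the fixed set ${\rm S}_0$, ${\rm H}^{{\rm S}_0} := \{{\rm T}\in{\rm H} : {\rm T}_0={\rm S}_0\}$ and, for an integer $u$, ${\rm H}_{u} := \{{\rm T}\in{\rm H}^{{\rm S}_0} : u_1({\rm T}) = u\}$. *)

(* Defs.v *)
From mathcomp Require Import all_boot.
Set Implicit Arguments. Unset Strict Implicit. Unset Printing Implicit Defensive.

Definition numerical_semigroup (S : pred nat) : Prop :=
  S 0 /\ (forall a b, S a -> S b -> S (a + b)) /\ (exists c, forall n, c <= n -> S n).

(* genus = number of gaps (well defined: any c beyond which all n are in S
   gives the same count) *)
Definition has_genus (S : pred nat) (g : nat) : Prop :=
  exists c, (forall n, c <= n -> S n) /\ count (predC S) (iota 0 c) = g.

Definition Sstar (g : nat) (S : pred nat) : seq nat := [seq s <- iota 1 (2 * g) | S s].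

Definition Sres (g : nat) (S : pred nat) (i : nat) : seq nat :=
  [seq s <- Sstar g S | s %% 3 == i].

Definition inflection (g : nat) (S : pred nat) : nat := sumn (Sstar g S).

(* (3,gamma)-hyperelliptic: the first gamma positive elements are multiples of 3,
   the gamma-th being 6 gamma, and 3(2 gamma + 1) belongs to S. *)
Definition hyperelliptic3 (gamma : nat) (S : pred nat) : Prop :=
  (forall s, 1 <= s <= 6 * gamma -> S s -> 3 %| s) /\
  count S (iota 1 (6 * gamma)) = gamma /\
  S (6 * gamma) /\ S (3 * (2 * gamma + 1)).

Definition inH (g gamma : nat) (S : pred nat) : Prop :=
  numerical_semigroup S /\ has_genus S g /\ hyperelliptic3 gamma S.

Definition is_u1 (T : pred nat) (u : nat) : Prop :=
  T u /\ u %% 3 != 0 /\ (forall t, t < u -> T t -> t %% 3 = 0).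

Definition is_u1H (g gamma : nat) (u : nat) : Prop :=
  (exists T, inH g gamma T /\ is_u1 T u) /\
  (forall T v, inH g gamma T -> is_u1 T v -> u <= v).

Definition inHu (g gamma : nat) (S0 : seq nat) (u : nat) (T : pred nat) : Prop :=
  inH g gamma T /\ Sres g T 0 = S0 /\ is_u1 T u.

Definition maximal_in_Hu (g gamma : nat) (S0 : seq nat) (u : nat) (T : pred nat) : Prop :=
  inHu g gamma S0 u T /\
  (forall T', inHu g gamma S0 u T' -> size (Sres g T' (u %% 3)) <= size (Sres g T (u %% 3))).

Definition proper_subseq_set (A B : seq nat) : Prop :=
  {subset A <= B} /\ exists2 x, x \in B & x \notin A.

(* Main.v *)
Require Import Defs.
From mathcomp Require Import all_boot zify.
Set Implicit Arguments. Unset Strict Implicit. Unset Printing Implicit Defensive.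

Fixpoint cnt (P : nat -> bool) (n : nat) : nat :=
  if n is n'.+1 then cnt P n' + P n' else 0.
Fixpoint wsum (P : nat -> bool) (n : nat) : nat :=
  if n is n'.+1 then wsum P n' + (if P n' then n' else 0) else 0.

Lemma cnt_ext (P Q : nat -> bool) n : (forall i, i < n -> P i = Q i) -> cnt P n = cnt Q n.
Proof.
elim: n => //= n IH H; rewrite IH ?H //; move=> i Hi; apply: H; lia.
Qed.
Lemma wsum_ext (P Q : nat -> bool) n : (forall i, i < n -> P i = Q i) -> wsum P n = wsum Q n.
Proof.
elim: n => //= n IH H; rewrite IH ?H //; move=> i Hi; apply: H; lia.
Qed.
Lemma cnt_le (P : nat -> bool) n : cnt P n <= n.
Proof. elim: n => //= n IH; case: (P n) => /=; lia. Qed.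
Lemma cnt_sub (P Q : nat -> bool) n : (forall i, i < n -> P i -> Q i) -> cnt P n <= cnt Q n.
Proof.
elim: n => //= n IH H.
have h1 : cnt P n <= cnt Q n by apply: IH => i Hi; apply: H; lia.
have := H n (ltnSn n). case: (P n); case: (Q n) => //=; try lia.
Qed.
Lemma cnt_mono (P : nat -> bool) a b : a <= b -> cnt P a <= cnt P b.
Proof.
move=> /subnK <-; elim: (b - a) => //= k IH; lia.
Qed.
Lemma cnt_stable (P : nat -> bool) a k : (forall i, a <= i -> ~~ P i) -> cnt P (k + a) = cnt P a.
Proof.
move=> H; elim: k => //= k IH; rewrite IH.
have := H (k + a) (leq_addl _ _). case: (P _) => //= _; lia.
Qed.
Lemma wsum_stable (P : nat -> bool) a k : (forall i, a <= i -> ~~ P i) -> wsum P (k + a) = wsum P a.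
Proof.
move=> H; elim: k => //= k IH; rewrite IH.
have := H (k + a) (leq_addl _ _). case: (P _) => //= _; lia.
Qed.
Lemma cnt_stable' (P : nat -> bool) a b : (forall i, a <= i -> ~~ P i) -> a <= b -> cnt P b = cnt P a.
Proof. move=> H /subnK <-; exact: cnt_stable. Qed.
Lemma wsum_stable' (P : nat -> bool) a b : (forall i, a <= i -> ~~ P i) -> a <= b -> wsum P b = wsum P a.
Proof. move=> H /subnK <-; exact: wsum_stable. Qed.
Lemma cnt_bound (P : nat -> bool) B n : (forall i, B <= i -> ~~ P i) -> cnt P n <= B.
Proof.
move=> H. case: (leqP n B) => h.
  apply: leq_trans (cnt_mono P h) (cnt_le _ _).
rewrite (cnt_stable' H (ltnW h)); exact: cnt_le.
Qed.
Lemma cnt_compl (P : nat -> bool) n : cnt P n + cnt (predC P) n = n.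
Proof. elim: n => //= n IH; case: (P n) => /=; lia. Qed.
Lemma wsum_compl (P : nat -> bool) n : wsum P n + wsum (predC P) n = wsum predT n.
Proof. elim: n => //= n IH; case: (P n) => /=; lia. Qed.
Lemma cnt_shift (P : nat -> bool) n : cnt P n.+1 = P 0 + cnt (fun a => P a.+1) n.
Proof. elim: n => [/=|n IH]; first lia. move: IH => /= IH; lia. Qed.
Lemma cnt_S (P : nat -> bool) n : cnt P n.+1 = cnt P n + P n. Proof. by []. Qed.
Lemma cnt_refl (P : nat -> bool) n : cnt (fun a => P (n - a)) n.+1 = cnt P n.+1.
Proof.
elim: n P => [|n IH] P; first by [].
rewrite [LHS]cnt_S subnn.
rewrite (@cnt_ext _ (fun a => (fun b => P b.+1) (n - a)) n.+1); last first.
  by move=> i Hi /=; congr P; lia.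
rewrite (IH (fun b => P b.+1)) [RHS]cnt_shift; lia.
Qed.

Lemma count_cnt (P : nat -> bool) n : count P (iota 0 n) = cnt P n.
Proof.
elim: n => [//|n IH]. rewrite -addn1 iotaD count_cat IH /= add0n addn1 addn0. by [].
Qed.
Lemma sumn_wsum (P : nat -> bool) n : sumn [seq s <- iota 0 n | P s] = wsum P n.
Proof.
elim: n => [//|n IH]. rewrite -addn1 iotaD filter_cat sumn_cat IH /= add0n addn1.
rewrite [wsum _ n.+1]/=; case: (P n) => /=; lia.
Qed.

Lemma cnt_split (P : nat -> bool) M :
  cnt P (3 * M) = cnt (fun t => P (3 * t)) M + cnt (fun t => P (3 * t + 1)) M
                  + cnt (fun t => P (3 * t + 2)) M.
Proof.
elim: M => // M IH. have -> : 3 * M.+1 = (3 * M).+3 by lia.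
rewrite /= IH addn1 addn2; lia.
Qed.
Lemma wsum_split (P : nat -> bool) M :
  wsum P (3 * M) = 3 * wsum (fun t => P (3 * t)) M
     + (3 * wsum (fun t => P (3 * t + 1)) M + cnt (fun t => P (3 * t + 1)) M)
     + (3 * wsum (fun t => P (3 * t + 2)) M + 2 * cnt (fun t => P (3 * t + 2)) M).
Proof.
elim: M => // M IH. have -> : 3 * M.+1 = (3 * M).+3 by lia.
rewrite /= IH addn1 addn2.
case: (P (3 * M)); case: (P (3 * M).+1); case: (P (3 * M).+2) => /=; lia.
Qed.

Lemma wsumT n : 2 * wsum predT n + n = n * n.
Proof. elim: n => //= n IH; nia. Qed.

Lemma gap_lower (Y : nat -> bool) n : cnt Y n * cnt Y n <= 2 * wsum Y n + cnt Y n.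
Proof.
elim: n => //= n IH. have := cnt_le Y n. case: (Y n) => /=; nia.
Qed.

Lemma gap_upper (Y : nat -> bool) m K :
  (forall t, t < m -> Y t) -> (forall t, m + K <= t -> ~~ Y t) ->
  forall n, 2 * wsum Y n + cnt Y n <= cnt Y n * cnt Y n + 2 * (K * K).
Proof.
move=> H1 H2.
have base : forall n, n <= m -> cnt Y n = n /\ wsum Y n = wsum predT n.
  elim=> [|n IH] Hn; first by [].
  have [e1 e2] := IH (ltnW Hn). rewrite [cnt _ _.+1]/= [wsum _ _.+1]/= e1 e2 H1 //; split; [lia | by []].
have step : forall k, 2 * wsum Y (m + k) + cnt Y (m + k) + 2 * K * m
     <= cnt Y (m + k) * cnt Y (m + k) + 2 * K * cnt Y (m + k)
     /\ m <= cnt Y (m + k) /\ cnt Y (m + k) <= m + K.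
  elim=> [|k [IH1 [IH2 IH3]]].
    rewrite addn0; have [-> ->] := base m (leqnn m). have := wsumT m; nia.
  rewrite addnS /=. have := cnt_le Y (m + k).
  case E: (Y (m + k)) => /=; last by rewrite !addn0; nia.
  have : m + k < m + K.
    case: (ltnP (m + k) (m + K)) => // h; have := H2 _ h; by rewrite E.
  nia.
move=> n. case: (leqP n m) => h.
  have [-> ->] := base n h. have := wsumT n; nia.
have [k ->] : exists k, n = m + k by exists (n - m); lia.
have [A [B C]] := step k; nia.
Qed.
Lemma ns_mul X x k : numerical_semigroup X -> X x -> X (k * x).
Proof.
move=> [H0 [Hadd _]] Hx; elim: k => [|k IH]; first by rewrite mul0n.
by rewrite mulSn; apply: Hadd.
Qed.

Lemma ns_sigma X gam : numerical_semigroup X -> 0 < gam -> X (6 * gam) ->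
  X (3 * (2 * gam + 1)) -> forall n, 4 * gam * gam <= n -> X (3 * n).
Proof.
move=> HX Hg H6 H7 n Hn.
have [_ [Hadd _]] := HX.
have e := divn_eq n (2 * gam).
set q := n %/ (2 * gam) in e *; set r := n %% (2 * gam) in e *.
have Hr : r < 2 * gam by rewrite /r ltn_mod; lia.
have Hq : 2 * gam <= q.
  case: (leqP (2 * gam) q) => // h. nia.
have -> : 3 * n = (q - r) * (6 * gam) + r * (3 * (2 * gam + 1)) by nia.
apply: Hadd; exact: ns_mul.
Qed.

Lemma ns_cond X g : numerical_semigroup X -> has_genus X g -> forall n, 2 * g <= n -> X n.
Proof.
move=> HX [c [Hc Hcount]] n Hn.
have [H0 [Hadd _]] := HX.
case E: (X n) => //.
have Hg : cnt (predC X) n.+1 <= g.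
  rewrite -Hcount count_cnt.
  have hs : forall i, c <= i -> ~~ (predC X) i by move=> i hi /=; rewrite Hc.
  case: (leqP n.+1 c) => h; first exact: cnt_mono.
  by rewrite (cnt_stable' hs (ltnW h)).
have Hp : cnt X n.+1 <= cnt (fun a => (predC X) (n - a)) n.+1.
  apply: cnt_sub => i hi Xi /=. apply/negP => Xni.
  have := Hadd _ _ Xi Xni. have -> : i + (n - i) = n by lia. by rewrite E.
rewrite cnt_refl in Hp. have := cnt_compl X n.+1. lia.
Qed.

Lemma ns_gaps X g L : numerical_semigroup X -> has_genus X g -> 2 * g <= L ->
  cnt (predC X) L = g.
Proof.
move=> HX HG HL. have Hc := ns_cond HX HG.
have hs : forall i, 2 * g <= i -> ~~ (predC X) i by move=> i hi /=; rewrite Hc.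
have [c [Hc' Hcount]] := HG.
have hs' : forall i, c <= i -> ~~ (predC X) i by move=> i hi /=; rewrite Hc'.
rewrite (cnt_stable' hs HL) -(cnt_stable' hs (leq_maxl (2 * g) c)).
rewrite (cnt_stable' hs' (leq_maxr (2 * g) c)) -Hcount count_cnt //.
Qed.
Lemma cnt_T n : cnt predT n = n.
Proof. elim: n => //= n ->; lia. Qed.

Lemma cnt_lt a M : a <= M -> cnt (fun t => t < a) M = a.
Proof.
move=> h. have hs : forall i, a <= i -> ~~ (i < a) by move=> i hi; lia.
rewrite (cnt_stable' hs h) -{3}(cnt_T a). apply: cnt_ext => i hi //=.
Qed.

Definition Wit (S : pred nat) (a b : nat) : pred nat :=
  fun n => if n %% 3 == 0 then S n else if n %% 3 == 1 then 3 * a + 1 <= n else 3 * b + 2 <= n.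

Lemma mod3_cases n : n %% 3 = 0 \/ n %% 3 = 1 \/ n %% 3 = 2.
Proof. lia. Qed.

Lemma Wit_large (S : pred nat) a b g n : (forall m, 2 * g <= m -> S m) ->
  3 * a + 3 * b + 2 * g + 3 <= n -> Wit S a b n.
Proof.
move=> HS hn; rewrite /Wit.
case: (mod3_cases n) => [->|[->|->]] /=; [apply: HS | |]; lia.
Qed.

Lemma witness g gam (S : pred nat) a b : inH g gam S -> 0 < gam ->
  a + b + cnt (fun t => ~~ S (3 * t)) g = g -> a <= b -> b <= 2 * a ->
  2 * gam <= a -> 4 * gam * gam <= a + b + 1 ->
  exists W, inH g gam W /\ is_u1 W (3 * a + 1).
Proof.
move=> [HN [HG [Hh1 [Hh2 [Hh3 Hh4]]]]] Hg Hab hab1 hab2 ha hab3.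
have Hc := ns_cond HN HG.
have [H0 [Hadd _]] := HN.
have Hsig := ns_sigma HN Hg Hh3 Hh4.
exists (Wit S a b). split; last first.
  split.
    rewrite /Wit. have -> : (3 * a + 1) %% 3 = 1 by lia.
    by rewrite /=.
  split; first by apply/eqP; lia.
  move=> t ht; rewrite /Wit.
  case: (mod3_cases t) => [->|[->|->]] //=; lia.
split.
  split; first by rewrite /Wit mod0n.
  split; last by exists (3 * a + 3 * b + 2 * g + 3) => n; exact: Wit_large.
  move=> x y; rewrite /Wit.
  case: (mod3_cases x) => [hx|[hx|hx]]; case: (mod3_cases y) => [hy|[hy|hy]].
  - have -> : (x + y) %% 3 = 0 by lia. rewrite hx hy /=; exact: Hadd.
  - have -> : (x + y) %% 3 = 1 by lia. rewrite hx hy /= => *; lia.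
  - have -> : (x + y) %% 3 = 2 by lia. rewrite hx hy /= => *; lia.
  - have -> : (x + y) %% 3 = 1 by lia. rewrite hx hy /= => *; lia.
  - have -> : (x + y) %% 3 = 2 by lia. rewrite hx hy /= => *; lia.
  - have -> : (x + y) %% 3 = 0 by lia. rewrite hx hy /= => h1 h2.
    have -> : x + y = 3 * ((x + y) %/ 3) by lia. apply: Hsig; lia.
  - have -> : (x + y) %% 3 = 2 by lia. rewrite hx hy /= => *; lia.
  - have -> : (x + y) %% 3 = 0 by lia. rewrite hx hy /= => h1 h2.
    have -> : x + y = 3 * ((x + y) %/ 3) by lia. apply: Hsig; lia.
  - have -> : (x + y) %% 3 = 1 by lia. rewrite hx hy /= => *; lia.
split.
  exists (3 * (g + a + b + 1)); split.
    move=> n hn; apply: (Wit_large Hc); lia.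
  rewrite count_cnt cnt_split.
  have -> : cnt (fun t => predC (Wit S a b) (3 * t)) (g + a + b + 1) =
            cnt (fun t => ~~ S (3 * t)) g.
    rewrite (@cnt_ext _ (fun t => ~~ S (3 * t))); last first.
      by move=> i _; rewrite /= /Wit; have -> : (3 * i) %% 3 = 0 by lia.
    apply: cnt_stable'; last lia.
    by move=> i hi; rewrite negbK; apply: Hc; lia.
  have -> : cnt (fun t => predC (Wit S a b) (3 * t + 1)) (g + a + b + 1) = a.
    rewrite -{3}(@cnt_lt a (g + a + b + 1)); last lia.
    apply: cnt_ext => i _; rewrite /= /Wit; have -> : (3 * i + 1) %% 3 = 1 by lia.
    by rewrite /=; apply/idP/idP; lia.
  have -> : cnt (fun t => predC (Wit S a b) (3 * t + 2)) (g + a + b + 1) = b.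
    rewrite -{3}(@cnt_lt b (g + a + b + 1)); last lia.
    apply: cnt_ext => i _; rewrite /= /Wit; have -> : (3 * i + 2) %% 3 = 2 by lia.
    by rewrite /=; apply/idP/idP; lia.
  lia.
have Heq : forall s, s <= 6 * gam -> Wit S a b s = S s.
  move=> s hs; rewrite /Wit.
  case: (mod3_cases s) => [hm|[hm|hm]]; rewrite hm //=.
  - case Es: (S s); last lia. have h : 0 < s <= 6 * gam by apply/andP; lia.
    by have := Hh1 s h Es; rewrite /dvdn hm.
  - case Es: (S s); last lia. have h : 0 < s <= 6 * gam by apply/andP; lia.
    by have := Hh1 s h Es; rewrite /dvdn hm.
split.
  move=> s /andP [h1 h2] Ws. rewrite Heq // in Ws. by apply: Hh1 => //; apply/andP.
split.
  rewrite -[RHS]Hh2; apply: eq_in_count => s; rewrite mem_iota => /andP [_ h].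
  apply: Heq; lia.
split; first by rewrite /Wit; have -> : (6 * gam) %% 3 = 0 by lia.
by rewrite /Wit; have -> : (3 * (2 * gam + 1)) %% 3 = 0 by lia.
Qed.
Lemma cnt_res (P : nat -> bool) r M : r < 3 ->
  cnt (fun n => P n && (n %% 3 == r)) (3 * M) = cnt (fun t => P (3 * t + r)) M.
Proof.
move=> hr; elim: M => // M IH. have -> : 3 * M.+1 = (3 * M).+3 by lia.
rewrite [LHS]/= IH [RHS]/=.
have e0 : (3 * M) %% 3 = 0 by lia.
have e1 : (3 * M).+1 %% 3 = 1 by lia.
have e2 : (3 * M).+2 %% 3 = 2 by lia.
rewrite e0 e1 e2.
move: hr; clear IH; case: r => [|[|[|r]]] // _; rewrite ?addn0 ?addn1 ?addn2 /= ?andbT ?andbF; lia.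
Qed.

Lemma cnt_add (P Q R : nat -> bool) n : (forall i, P i + Q i = R i) ->
  cnt P n + cnt Q n = cnt R n.
Proof. move=> H; elim: n => //= n IH; have := H n; lia. Qed.

Lemma infl_eq (X : pred nat) g : inflection g X = wsum X (2 * g).+1.
Proof.
rewrite /inflection /Sstar -sumn_wsum /=. by case: (X 0) => //=; rewrite add0n.
Qed.

Lemma infl_gsum (X : pred nat) g : numerical_semigroup X -> has_genus X g ->
  inflection g X + wsum (predC X) (3 * g) = wsum predT (2 * g).+1.
Proof.
move=> HN HG. have Hc := ns_cond HN HG.
have hs : forall i, 2 * g <= i -> ~~ (predC X) i by move=> i hi /=; rewrite Hc.
rewrite infl_eq (wsum_stable' hs (_ : 2 * g <= 3 * g)); last lia.
by rewrite -(wsum_stable' hs (leqnSn (2 * g))) wsum_compl.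
Qed.

Lemma c_total (X : pred nat) g : numerical_semigroup X -> has_genus X g ->
  cnt (fun t => ~~ X (3 * t)) g + cnt (fun t => ~~ X (3 * t + 1)) g
  + cnt (fun t => ~~ X (3 * t + 2)) g = g.
Proof.
move=> HN HG. have := cnt_split (predC X) g.
rewrite (ns_gaps HN HG (_ : 2 * g <= 3 * g)); last lia.
move=> e; by rewrite [RHS]e.
Qed.

Lemma size_res (X : pred nat) g r : 0 < r < 3 -> numerical_semigroup X -> has_genus X g ->
  size (Sres g X r) + cnt (fun t => ~~ X (3 * t + r)) g = cnt (fun n => n %% 3 == r) (2 * g).+1.
Proof.
move=> /andP [hr1 hr2] HN HG. have Hc := ns_cond HN HG.
rewrite /Sres /Sstar size_filter count_filter.
have -> : count (predI (fun s => s %% 3 == r) X) (iota 1 (2 * g)) =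
          cnt (predI (fun s => s %% 3 == r) X) (2 * g).+1.
  rewrite -count_cnt /=. rewrite mod0n. have -> : (0 == r) = false by case: r hr1 hr2.
  by [].
rewrite -(cnt_res (fun n => ~~ X n) g hr2).
have hs : forall i, 2 * g <= i -> ~~ (~~ X i && (i %% 3 == r)) by move=> i hi; rewrite Hc.
rewrite (cnt_stable' hs (_ : 2 * g <= 3 * g)); last lia.
rewrite -(cnt_stable' hs (leqnSn (2 * g))).
apply: cnt_add => i /=. by case: (X i); case: (i %% 3 == r).
Qed.

Lemma class_closed (X : pred nat) g gam r m t : inH g gam X -> 0 < gam ->
  X (3 * m + r) -> m + 4 * gam * gam <= t -> X (3 * t + r).
Proof.
move=> [HN [HG [_ [_ [Hh3 Hh4]]]]] Hg Hm ht.
have [_ [Hadd _]] := HN.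
have -> : 3 * t + r = (3 * m + r) + 3 * (t - m) by lia.
apply: Hadd => //; apply: (ns_sigma HN Hg Hh3 Hh4); lia.
Qed.

Lemma c_class_bound (X : pred nat) g gam r m : inH g gam X -> 0 < gam ->
  X (3 * m + r) -> cnt (fun t => ~~ X (3 * t + r)) g <= m + 4 * gam * gam.
Proof.
move=> HX Hg Hm; apply: cnt_bound => t ht; rewrite negbK.
exact: (class_closed HX Hg Hm ht).
Qed.

Lemma c0_bound (X : pred nat) g gam : inH g gam X -> 0 < gam ->
  cnt (fun t => ~~ X (3 * t)) g <= 4 * gam * gam.
Proof.
move=> [HN [HG [_ [_ [Hh3 Hh4]]]]] Hg; apply: cnt_bound => t ht; rewrite negbK.
exact: (ns_sigma HN Hg Hh3 Hh4).
Qed.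

Lemma gap_upper_X (X : pred nat) g gam r : inH g gam X -> 0 < gam -> r < 3 ->
  2 * wsum (fun t => ~~ X (3 * t + r)) g + cnt (fun t => ~~ X (3 * t + r)) g <=
  cnt (fun t => ~~ X (3 * t + r)) g * cnt (fun t => ~~ X (3 * t + r)) g
  + 2 * ((4 * gam * gam) * (4 * gam * gam)).
Proof.
move=> HX Hg hr.
have [HN [HG _]] := HX. have Hc := ns_cond HN HG.
have ex : exists t, X (3 * t + r) by exists g; apply: Hc; lia.
case: (ex_minnP ex) => m Hm Hmin.
apply: (gap_upper (m := m)).
  move=> t ht; apply/negP => Xt; have := Hmin t Xt; lia.
move=> t ht; rewrite negbK; exact: (class_closed HX Hg Hm ht).
Qed.

Lemma arith (i k a b a' b' z1 z2 z1' z2' K : nat) :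
  i + k = 3 -> 1 <= i -> 1 <= k ->
  a + b = a' + b' -> a' < a -> a + 2 * (K * K) + 1 <= b ->
  a' * a' <= 2 * z1' + a' -> b' * b' <= 2 * z2' + b' ->
  2 * z1 + a <= a * a + 2 * (K * K) -> 2 * z2 + b <= b * b + 2 * (K * K) ->
  3 * z1 + i * a + (3 * z2 + k * b) < 3 * z1' + i * a' + (3 * z2' + k * b').
Proof.
move=> hik hi hk hab ha hb l1 l2 u1 u2.
move: hb u1 u2; set KK := K * K => hb u1 u2.
have [d ea] : exists d, a = a' + d.+1 by exists (a - a'.+1); lia.
have eb' : b' = b + d.+1 by lia.
subst a b'.
have [e eb] : exists e, b = a' + e + 2 * KK + 2 by exists (b - a' - 2 * KK - 2); lia.
subst b.
have hi' : i <= 2 by lia.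
nia.
Qed.

Lemma res_mem (X : pred nat) g r x : (x \in Sres g X r) = [&& x %% 3 == r, X x & 0 < x <= 2 * g].
Proof.
rewrite /Sres /Sstar !mem_filter mem_iota.
by case: (x %% 3 == r); case: (X x) => //=; rewrite add1n ltnS.
Qed.

Lemma Sres_uniq (X : pred nat) g r : uniq (Sres g X r).
Proof. by apply: filter_uniq; apply: filter_uniq; apply: iota_uniq. Qed.

Theorem lemma2p5 :
  forall gamma : nat, exists N : nat, forall g : nat, N <= g ->
  forall (S0 : seq nat),
    (exists S', inH g gamma S' /\ Sres g S' 0 = S0) ->
  forall (u1 u1' uH : nat) (S T : pred nat),
    is_u1H g gamma uH ->
    maximal_in_Hu g gamma S0 u1 S ->
    maximal_in_Hu g gamma S0 u1' T ->
    u1 - uH < 6 * gamma ->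
    proper_subseq_set (Sres g S (u1 %% 3)) (Sres g T (u1' %% 3)) ->
    inflection g T < inflection g S.
Proof.
move=> gam.
exists (6 * ((4 * gam * gam) * (4 * gam * gam)) + 7 * (4 * gam * gam) + 12 * gam + 20).
move=> g Hg S0 _ u1 u1' uH S T [_ HuHmin] [[HS [HS0 Hu1]] _] [[HT [HT0 Hu1']] _]
  Hchi [Hsub [x HxT HxS]].
have Hgam : 0 < gam by lia.
have [HSN [HSG _]] := HS. have [HTN [HTG _]] := HT.
have HcS := ns_cond HSN HSG. have HcT := ns_cond HTN HTG.
have Hm3 : forall t, S (3 * t) = T (3 * t).
  move=> t. case: (posnP t) => [->|ht].
    rewrite muln0; have [-> _] := HSN; by have [-> _] := HTN.
  case: (leqP (3 * t) (2 * g)) => h.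
    have e1 := res_mem S g 0 (3 * t); have e2 := res_mem T g 0 (3 * t).
    rewrite HS0 in e1; rewrite HT0 in e2.
    have hm : (3 * t) %% 3 == 0 by apply/eqP; lia.
    have hp : 0 < 3 * t <= 2 * g by apply/andP; lia.
    rewrite hm hp /= andbT in e1. rewrite hm hp /= andbT in e2.
    by rewrite -e1 -e2.
  rewrite HcS ?HcT //; lia.
have c0eq : cnt (fun t => ~~ S (3 * t)) g = cnt (fun t => ~~ T (3 * t)) g.
  by apply: cnt_ext => t _; rewrite Hm3.
have z0eq : wsum (fun t => ~~ S (3 * t)) g = wsum (fun t => ~~ T (3 * t)) g.
  by apply: wsum_ext => t _; rewrite Hm3.
have c0b := c0_bound HS Hgam.
have tS := c_total HSN HSG. have tT := c_total HTN HTG.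
set c0 := cnt (fun t => ~~ S (3 * t)) g in c0eq c0b tS.
have [W [HW HWu]] := witness (a := (g - c0 + 2) %/ 3) (b := g - c0 - (g - c0 + 2) %/ 3)
   HS Hgam ltac:(lia) ltac:(lia) ltac:(lia) ltac:(lia) ltac:(lia).
have HuHb := HuHmin W _ HW HWu.
have [Hu1in [Hu1nz Hu1min]] := Hu1.
have Hu1pos : 0 < u1 by move: Hu1nz; case: (posnP u1) => [->|//]; rewrite mod0n.
have Hmem : u1 \in Sres g S (u1 %% 3).
  by rewrite res_mem eqxx Hu1in /=; apply/andP; lia.
have Hji : u1' %% 3 = u1 %% 3.
  by have := Hsub _ Hmem; rewrite res_mem => /and3P [/eqP h _ _].
rewrite Hji in Hsub HxT.
have Hsize : size (Sres g S (u1 %% 3)) < size (Sres g T (u1 %% 3)).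
  have := @uniq_leq_size _ (x :: Sres g S (u1 %% 3)) (Sres g T (u1 %% 3)).
  apply.
    by rewrite /= HxS Sres_uniq.
  by move=> y; rewrite inE => /orP [/eqP -> // | /Hsub].
have hr : 0 < u1 %% 3 < 3 by apply/andP; split; [rewrite lt0n | rewrite ltn_mod].
have sS := size_res hr HSN HSG. have sT := size_res hr HTN HTG.
have cb := @c_class_bound S g gam (u1 %% 3) (u1 %/ 3) HS Hgam
   ltac:(by rewrite mulnC -divn_eq).
have lS1 := gap_lower (fun t => ~~ S (3 * t + 1)) g.
have lS2 := gap_lower (fun t => ~~ S (3 * t + 2)) g.
have lT1 := gap_lower (fun t => ~~ T (3 * t + 1)) g.
have lT2 := gap_lower (fun t => ~~ T (3 * t + 2)) g.
have uS1 := @gap_upper_X S g gam 1 HS Hgam isT.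
have uS2 := @gap_upper_X S g gam 2 HS Hgam isT.
have iS := infl_gsum HSN HSG. have iT := infl_gsum HTN HTG.
rewrite wsum_split in iS. rewrite wsum_split in iT.
have z0eq' : wsum (fun t => predC S (3 * t)) g = wsum (fun t => predC T (3 * t)) g.
  exact: z0eq.
have : u1 %% 3 = 1 \/ u1 %% 3 = 2 by lia.
case=> hi; rewrite hi in sS sT cb Hsize.
- have e1 : cnt (fun t => ~~ S (3 * t + 1)) g + cnt (fun t => ~~ S (3 * t + 2)) g =
            cnt (fun t => ~~ T (3 * t + 1)) g + cnt (fun t => ~~ T (3 * t + 2)) g by lia.
  have e2 : cnt (fun t => ~~ T (3 * t + 1)) g < cnt (fun t => ~~ S (3 * t + 1)) g by lia.
  have e3 : cnt (fun t => ~~ S (3 * t + 1)) g + 2 * ((4 * gam * gam) * (4 * gam * gam)) + 1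
            <= cnt (fun t => ~~ S (3 * t + 2)) g.
    move: Hg c0b cb uS1 uS2. set K := 4 * gam * gam. set KK := K * K. move=> *. lia.
  have H := @arith 1 2 _ _ _ _ _ _ _ _ (4 * gam * gam) erefl isT isT e1 e2 e3 lT1 lT2 uS1 uS2.
  change (fun t => predC S (3 * t + 1)) with (fun t => ~~ S (3 * t + 1)) in iS.
  change (fun t => predC S (3 * t + 2)) with (fun t => ~~ S (3 * t + 2)) in iS.
  change (fun t => predC T (3 * t + 1)) with (fun t => ~~ T (3 * t + 1)) in iT.
  change (fun t => predC T (3 * t + 2)) with (fun t => ~~ T (3 * t + 2)) in iT.
  lia.
- have e1 : cnt (fun t => ~~ S (3 * t + 2)) g + cnt (fun t => ~~ S (3 * t + 1)) g =
            cnt (fun t => ~~ T (3 * t + 2)) g + cnt (fun t => ~~ T (3 * t + 1)) g by lia.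
  have e2 : cnt (fun t => ~~ T (3 * t + 2)) g < cnt (fun t => ~~ S (3 * t + 2)) g by lia.
  have e3 : cnt (fun t => ~~ S (3 * t + 2)) g + 2 * ((4 * gam * gam) * (4 * gam * gam)) + 1
            <= cnt (fun t => ~~ S (3 * t + 1)) g.
    move: Hg c0b cb uS1 uS2. set K := 4 * gam * gam. set KK := K * K. move=> *. lia.
  have H := @arith 2 1 _ _ _ _ _ _ _ _ (4 * gam * gam) erefl isT isT e1 e2 e3 lT2 lT1 uS2 uS1.
  change (fun t => predC S (3 * t + 1)) with (fun t => ~~ S (3 * t + 1)) in iS.
  change (fun t => predC S (3 * t + 2)) with (fun t => ~~ S (3 * t + 2)) in iS.
  change (fun t => predC T (3 * t + 1)) with (fun t => ~~ T (3 * t + 1)) in iT.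
  change (fun t => predC T (3 * t + 2)) with (fun t => ~~ T (3 * t + 2)) in iT.
  lia.
Qed.
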